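(* There is an infinite family of undirected graphs (with unit edge lengths) such that, with $n$ the number of vertices, the minimum size of a hierarchical hub labeling is $\Omega(\sqrt n)$ times larger than the minimum size of a hub labeling.
   Context: A hub labeling of an undirected graph $G=(V,E)$, $n=|V|$, assigns to each vertex $v$ a set $L(v)\subseteq V$ such that for every pair $u,w$ (including $u=w$), $L(u)\cap L(w)$ contains a vertex on some shortest $u$–$w$ path; its size is $\sum_v|L(v)|$. It is hierarchical if there is a bijection $\pi:V\to\{1,\dots,n\}$ such that $u\in L(v)$ implies $\pi(u)\le\pi(v)$. *)

(* Defs.v *)
From mathcomp Require Import all_boot all_order all_algebra.
From mathcomp Require Import reals.
Set Implicit Arguments. Unset Strict Implicit. Unset Printing Implicit Defensive.
Import Order.TTheory GRing.Theory Num.Theory.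

Definition simple_graph (n : nat) (e : rel 'I_n) : Prop :=
  symmetric e /\ irreflexive e.

(* A u-w walk: a sequence p with u :: p an e-path ending at w; its length
   (number of edges) is size p. *)
Definition is_walk n (e : rel 'I_n) (u w : 'I_n) (p : seq 'I_n) : Prop :=
  path e u p /\ last u p = w.

Definition is_shortest_path n (e : rel 'I_n) (u w : 'I_n) (p : seq 'I_n) : Prop :=
  is_walk e u w p /\ forall q, is_walk e u w q -> size p <= size q.

Definition on_shortest_path n (e : rel 'I_n) (u w h : 'I_n) : Prop :=
  exists p, is_shortest_path e u w p /\ h \in u :: p.

Definition is_hub_labeling n (e : rel 'I_n) (L : 'I_n -> {set 'I_n}) : Prop :=
  forall u w : 'I_n, exists h, h \in L u :&: L w /\ on_shortest_path e u w h.

Definition labeling_size n (L : 'I_n -> {set 'I_n}) : nat :=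
  \sum_(v : 'I_n) #|L v|.

(* Hierarchical: there is a bijection pi : V -> {0,..,n-1} (i.e. {1..n}
   shifted) with u \in L v -> pi u <= pi v. *)
Definition is_hierarchical n (L : 'I_n -> {set 'I_n}) : Prop :=
  exists pi : 'I_n -> 'I_n, bijective pi /\
    forall u v, u \in L v -> pi u <= pi v.

Definition min_HL_size n (e : rel 'I_n) (k : nat) : Prop :=
  (exists L, is_hub_labeling e L /\ labeling_size L = k) /\
  (forall L, is_hub_labeling e L -> k <= labeling_size L).

Definition min_HHL_size n (e : rel 'I_n) (k : nat) : Prop :=
  (exists L, is_hub_labeling e L /\ is_hierarchical L /\ labeling_size L = k) /\
  (forall L, is_hub_labeling e L -> is_hierarchical L -> k <= labeling_size L).

(* Main.v *)
Require Import Defs.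
From mathcomp Require Import all_boot all_order all_algebra.
From mathcomp Require Import reals.
From mathcomp Require Import zify ring lra.
From Stdlib Require Import Classical.
Import Order.TTheory GRing.Theory Num.Theory.
Set Implicit Arguments. Unset Strict Implicit. Unset Printing Implicit Defensive.

Lemma ex_min_prop (P : nat -> Prop) :
  (exists k, P k) -> exists k, P k /\ forall j, P j -> (k <= j)%N.
Proof.
move=> [k Pk].
suff H : forall k j, (j <= k)%N -> P j -> exists m, P m /\ forall i, P i -> (m <= i)%N.
  exact: (H k k (leqnn k) Pk).
clear k Pk.
elim=> [|k IH] j.
  rewrite leqn0 => /eqP -> P0; exists 0%N; split=> //.
move=> hj Pj.
case: (classic (exists i, (i < j)%N /\ P i)) => [[i [hi Pi]]|hno].
  apply: (IH i) => //; lia.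
exists j; split=> // i Pi; case: (ltnP i j) => // hij.
by exfalso; apply: hno; exists i.
Qed.

Lemma walk0 n (e : rel 'I_n) u w : is_walk e u w [::] -> u = w.
Proof. by case. Qed.

Lemma walk1 n (e : rel 'I_n) u w p : is_walk e u w p -> size p = 1%N -> e u w.
Proof. by case: p => [|x [|y q]] //= [/andP[h _] <-]. Qed.

Lemma walk2 n (e : rel 'I_n) u w p : is_walk e u w p -> size p = 2%N ->
  exists x, [/\ p = [:: x; w], e u x & e x w].
Proof.
case: p => [|x [|y [|z q]]] //= [/and3P[h1 h2 _] <-] _.
by exists x.
Qed.

Lemma walk_parity n (e : rel 'I_n) (s : 'I_n -> bool) :
  (forall a b, e a b -> s a != s b) ->
  forall p u w, is_walk e u w p -> odd (size p) = (s u != s w).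
Proof.
move=> hs; elim=> [|x p IH] u w.
  by move=> /walk0 ->; rewrite eqxx.
case=> /= /andP[hux hp] hl.
rewrite (IH x w) //; move: (hs _ _ hux).
by case: (s u); case: (s x); case: (s w).
Qed.

Lemma is_walk_cons n (e : rel 'I_n) u x w p :
  e u x -> is_walk e x w p -> is_walk e u w (x :: p).
Proof. by move=> h [hp hl]; split=> //=; rewrite h. Qed.

Lemma mid_hub n (e : rel 'I_n) (L : 'I_n -> {set 'I_n}) x u w :
  symmetric e -> ~~ e u w ->
  (forall y, e y u -> e y w -> y = x) ->
  e x u -> e x w -> u != w -> is_hub_labeling e L ->
  exists h, h \in L u :&: L w /\ h \in [:: u; x; w].
Proof.
move=> hsym hnuw huniq hxu hxw hne HL.
have [h [hL [p [[hw hmin] hp]]]] := HL u w.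
exists h; split=> //.
have hwal : is_walk e u w [:: x; w].
  by split=> //=; rewrite -hsym hxu hxw.
have := hmin _ hwal => /= hs.
case: p hw hmin hp hs => [|y [|z [|t q]]] //=.
- by move=> /walk0 heq; rewrite heq eqxx in hne.
- by move=> hw _ _ _; have := walk1 hw erefl; rewrite (negbTE hnuw).
- move=> hw _ hp _; have [y' [hyz h1 h2]] := walk2 hw erefl.
  case: hyz => ? ?; subst y' z.
  have hy : y = x by apply: huniq; rewrite // hsym.
  by rewrite hy in hp.
Qed.

Lemma card_set1 (I : finType) (P : I -> bool) :
  #|[set b | P b]| = (\sum_b (if P b then 1 else 0))%N.
Proof.
rewrite -sum1_card big_mkcond /=; apply: (@eq_bigr nat 0%N addn) => b _.
by rewrite inE.
Qed.

Lemma card_pairs (I J : finType) (P : I -> J -> bool) :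
  #|[set ab : I * J | P ab.1 ab.2]| = (\sum_a #|[set b | P a b]|)%N.
Proof.
rewrite -sum1_card big_mkcond /=.
rewrite (eq_bigr (fun ab => (fun a b => if P a b then 1%N else 0%N) ab.1 ab.2)); last first.
  by move=> [a b] _; rewrite inE.
rewrite -(pair_bigA _ (fun a b => if P a b then 1%N else 0%N)) /=.
apply: (@eq_bigr nat 0%N addn) => a _.
by rewrite card_set1.
Qed.

Lemma size_card n (L : 'I_n -> {set 'I_n}) :
  labeling_size L = #|[set ab : 'I_n * 'I_n | ab.2 \in L ab.1]|.
Proof.
rewrite (card_pairs (fun a b => b \in L a)) /labeling_size.
apply: (@eq_bigr nat 0%N addn) => a _.
by apply: eq_card => b; rewrite inE.
Qed.

Lemma card_edges n (e : rel 'I_n) d :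
  (forall x, #|[set y | e x y]| = d) ->
  #|[set xu : 'I_n * 'I_n | e xu.1 xu.2]| = (n * d)%N.
Proof.
move=> hd; rewrite (card_pairs e) (eq_bigr (fun _ => d)); last by move=> x _; rewrite hd.
by rewrite sum_nat_const card_ord.
Qed.

Lemma hhl_lower n (e : rel 'I_n) d :
  symmetric e -> irreflexive e ->
  (forall x u w, e x u -> e x w -> ~~ e u w) ->
  (forall x y u w, e x u -> e x w -> e y u -> e y w -> u != w -> x = y) ->
  (forall x, #|[set y | e x y]| = d) ->
  forall L, is_hub_labeling e L -> is_hierarchical L ->
  (n * d * d.-1 <= 4 * labeling_size L)%N.
Proof.
move=> hsym hirr hnadj huniq hd L HL [pi [pibij hpi]].
have piinj := bij_inj pibij.
pose U := [set xu : 'I_n * 'I_n | e xu.1 xu.2 && (pi xu.2 < pi xu.1)].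
pose D := [set xu : 'I_n * 'I_n | e xu.1 xu.2 && (pi xu.1 < pi xu.2)].
pose Tr := [set t : ('I_n * 'I_n) * 'I_n |
   (t.1 \in U) && e t.1.1 t.2 && (t.1.2 != t.2)].
pose S := [set ab : 'I_n * 'I_n | ab.2 \in L ab.1].
have hUD : #|D| = #|U|.
  have -> : D = (fun xu : 'I_n * 'I_n => (xu.2, xu.1)) @: U.
    apply/setP => -[a b]; rewrite !inE /=; apply/idP/imsetP.
      move=> /andP[hab hlt]; exists (b, a) => //; by rewrite inE /= hsym hab hlt.
    by move=> [[c f]]; rewrite inE /= => /andP[hcf hlt] [-> ->]; rewrite hsym hcf.
  by apply: card_imset => -[a b] [c f] /= [-> ->].
have hE : (2 * #|U| = n * d)%N.
  rewrite -(card_edges hd).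
  rewrite -(cardsID [set xu : 'I_n * 'I_n | pi xu.2 < pi xu.1] [set xu : 'I_n * 'I_n | e xu.1 xu.2]).
  have -> : [set xu : 'I_n * 'I_n | e xu.1 xu.2] :&: [set xu | pi xu.2 < pi xu.1] = U.
    by apply/setP => -[a b]; rewrite !inE.
  have -> : [set xu : 'I_n * 'I_n | e xu.1 xu.2] :\: [set xu | pi xu.2 < pi xu.1] = D.
    apply/setP => -[a b]; rewrite !inE /=.
    case hab: (e a b) => /=; last by rewrite andbF.
    rewrite andbT -leqNgt leq_eqVlt.
    case: eqP => //= hq; have heq : a = b by apply: piinj; apply: val_inj.
    by subst b; rewrite hirr in hab.
  by rewrite hUD; lia.
have hT : #|Tr| = (#|U| * d.-1)%N.
  rewrite (card_pairs (fun xu w => (xu \in U) && e xu.1 w && (xu.2 != w))).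
  rewrite -sum_nat_const [RHS]big_mkcond /=.
  apply: (@eq_bigr nat 0%N addn) => -[x u] _ /=.
  case hU: ((x, u) \in U) => /=; last by rewrite card_set1 big1.
  have hxu : e x u by move: hU; rewrite inE => /andP[].
  rewrite -(hd x) (cardsD1 u [set y | e x y]) inE hxu /= add0n.
  by apply: eq_card => w; rewrite !inE eq_sym andbC.
have hTS : (#|Tr| <= 2 * #|S|)%N.
  pose T1 := Tr :&: [set t | t.2 \in L t.1.2].
  pose T2 := Tr :&: [set t | t.1.2 \in L t.2].
  have hsub : Tr \subset T1 :|: T2.
    apply/subsetP => -[[x u] w] ht; move: (ht); rewrite inE /= => /andP[/andP[hU hxw] hne].
    move: hU; rewrite inE /= => /andP[hxu hlt].
    have [h [hL hh]] := mid_hub hsym (hnadj _ _ _ hxu hxw)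
      (fun y hyu hyw => huniq _ _ _ _ hyu hyw hxu hxw hne) hxu hxw hne HL.
    move: hL; rewrite inE => /andP[hLu hLw].
    rewrite in_setU !in_setI ht /= !inE; move: hh; rewrite !inE => /or3P[/eqP hx|/eqP hx|/eqP hx]; subst h.
    - by rewrite hLw orbT.
    - by have := hpi _ _ hLu; rewrite leqNgt hlt.
    - by rewrite hLu.
  have h1 : (#|T1| <= #|S|)%N.
    rewrite -(@card_in_imset _ _ (fun t : ('I_n * 'I_n) * 'I_n => (t.1.2, t.2))).
      apply: subset_leq_card; apply/subsetP => ab /imsetP[[[x u] w] ht ->].
      by move: ht; rewrite /T1 /T2 !inE /= => /andP[_ ->].
    move=> [[x u] w] [[x' u'] w']; rewrite /T1 /Tr /U !inE /=.
    move=> /andP[/andP[/andP[/andP[hxu _] hxw] hne] _].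
    move=> /andP[/andP[/andP[/andP[hxu' _] hxw'] hne'] _] [eu ew]; subst u' w'.
    by rewrite (huniq _ _ _ _ hxu hxw hxu' hxw' hne).
  have h2 : (#|T2| <= #|S|)%N.
    rewrite -(@card_in_imset _ _ (fun t : ('I_n * 'I_n) * 'I_n => (t.2, t.1.2))).
      apply: subset_leq_card; apply/subsetP => ab /imsetP[[[x u] w] ht ->].
      by move: ht; rewrite /T1 /T2 !inE /= => /andP[_ ->].
    move=> [[x u] w] [[x' u'] w']; rewrite /T2 /Tr /U !inE /=.
    move=> /andP[/andP[/andP[/andP[hxu _] hxw] hne] _].
    move=> /andP[/andP[/andP[/andP[hxu' _] hxw'] hne'] _] [ew eu]; subst u' w'.
    by rewrite (huniq _ _ _ _ hxu hxw hxu' hxw' hne).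
  have := subset_leq_card hsub; have := cardsU T1 T2; lia.
rewrite size_card -/S.
have : (2 * #|Tr| = n * d * d.-1)%N by rewrite hT -hE; lia.
lia.
Qed.

Definition V (p : nat) : finType := (('F_p * 'F_p) + ('F_p * 'F_p))%type.

Definition Einc p (s t : V p) : bool :=
  match s, t with
  | inl (a, b), inr (m, c) => (b == m * a + c)%R
  | inr (m, c), inl (a, b) => (b == m * a + c)%R
  | _, _ => false
  end.

Definition side p (s : V p) : bool := if s is inl _ then true else false.

Lemma Einc_sym p : symmetric (@Einc p).
Proof. by move=> [[a b]|[a b]] [[c d]|[c d]]. Qed.

Lemma Einc_irr p : irreflexive (@Einc p).
Proof. by move=> [[a b]|[a b]]. Qed.

Lemma Einc_side p (s t : V p) : Einc s t -> side s != side t.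
Proof. by case: s => [[a b]|[a b]]; case: t => [[c d]|[c d]]. Qed.

Lemma Einc_nadj p (x u w : V p) : Einc x u -> Einc x w -> ~~ Einc u w.
Proof.
by case: x => [[a b]|[a b]]; case: u => [[c d]|[c d]]; case: w => [[f g]|[f g]].
Qed.

Lemma C4_core (F : fieldType) (a a' m1 m2 c1 c2 : F) :
  (m1 * a + c1 = m2 * a + c2)%R -> (m1 * a' + c1 = m2 * a' + c2)%R ->
  (m1 = m2 /\ c1 = c2) \/ a = a'.
Proof.
move=> h1 h2.
have hm : ((m1 - m2) * (a - a') = 0)%R.
  have -> : ((m1 - m2) * (a - a') = ((m1 * a + c1) - (m2 * a + c2)) - ((m1 * a' + c1) - (m2 * a' + c2)))%R by ring.
  by rewrite h1 h2 !subrr.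
move/eqP: hm; rewrite mulf_eq0 => /orP[hm|ha].
- left; have hm' : m1 = m2 by apply/eqP; rewrite -subr_eq0.
  split=> //; subst m2.
  have -> : c1 = ((m1 * a + c1) - m1 * a)%R by ring.
  rewrite h1; ring.
- by right; apply/eqP; rewrite -subr_eq0.
Qed.

Lemma Einc_C4 p (x y u w : V p) :
  Einc x u -> Einc x w -> Einc y u -> Einc y w -> u != w -> x = y.
Proof.
case: x => [[a b]|[m c]]; case: y => [[a' b']|[m' c']];
case: u => [[a1 b1]|[m1 c1]] //; case: w => [[a2 b2]|[m2 c2]] //=.
- move=> /eqP h1 /eqP h2 /eqP h3 /eqP h4 hne.
  have [[hm hc]|ha] := C4_core (etrans (esym h1) h2) (etrans (esym h3) h4).
    by subst; rewrite eqxx in hne.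
  by subst a'; rewrite h1 h3.
- move=> /eqP h1 /eqP h2 /eqP h3 /eqP h4 hne.
  have [[hm hc]|ha] := C4_core (etrans (esym h1) h3) (etrans (esym h2) h4).
    by subst.
  by subst a2; rewrite h1 -h2 eqxx in hne.
Qed.

Lemma Einc_deg p : prime p -> forall s : V p, #|[set t | Einc s t]| = p.
Proof.
move=> pr [[a b]|[m c]].
- have -> : [set t | Einc (inl (a, b)) t] =
      (fun m : 'F_p => (inr (m, b - m * a)%R : V p)) @: [set: 'F_p].
    apply/setP => -[[x y]|[x y]]; rewrite !inE /=.
      by apply/esym/imsetP => -[z _].
    apply/idP/imsetP => [/eqP hy|[z _ [-> ->]]].
      by exists x; rewrite ?in_setT // hy; congr (inr (_, _)); ring.
    by apply/eqP; ring.
  rewrite card_imset ?cardsT ?card_Fp //.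
  by move=> x y [].
- have -> : [set t | Einc (inr (m, c)) t] =
      (fun a : 'F_p => (inl (a, m * a + c)%R : V p)) @: [set: 'F_p].
    apply/setP => -[[x y]|[x y]]; rewrite !inE /=; last first.
      by apply/esym/imsetP => -[z _].
    apply/idP/imsetP => [/eqP hy|[z _ [-> ->]]].
      by exists x; rewrite ?in_setT // hy.
    by [].
  rewrite card_imset ?cardsT ?card_Fp //.
  by move=> x y [].
Qed.

Definition Xlab p (s : V p) : {set V p} :=
  match s with
  | inl (a, b) => [set (inl (a + 1, 0)%R : V p)]
  | inr (m, c) => (fun c' : 'F_p => (inr (m + 1, c')%R : V p)) @: [set: 'F_p]
  end.

Definition Lv p (s : V p) : {set V p} := s |: ([set t | Einc s t] :|: Xlab s).

Lemma Lv_card p : prime p -> forall s : V p, (#|Lv s| <= 1 + (p + p))%N.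
Proof.
move=> pr s; rewrite /Lv cardsU1.
have hX : (#|Xlab s| <= p)%N.
  case: s => [[a b]|[m c]] /=.
    by rewrite cards1 prime_gt0.
  by rewrite card_imset ?cardsT ?card_Fp // => x y [].
have := cardsU [set t | Einc s t] (Xlab s); rewrite Einc_deg //.
have hb := leq_b1 (s \notin ([set t | Einc s t] :|: Xlab s)); lia.
Qed.

Definition ev p : 'I_#|V p| -> V p := enum_val.
Definition er p : V p -> 'I_#|V p| := enum_rank.
Definition eG p : rel 'I_#|V p| := fun i j => Einc (ev i) (ev j).
Definition LG p (i : 'I_#|V p|) : {set 'I_#|V p|} := [set j | ev j \in Lv (ev i)].

Lemma erK p : cancel (@er p) (@ev p). Proof. exact: enum_rankK. Qed.
Lemma evK p : cancel (@ev p) (@er p). Proof. exact: enum_valK. Qed.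

Lemma eG_er p (s t : V p) : eG (er s) (er t) = Einc s t.
Proof. by rewrite /eG !erK. Qed.

Lemma path_map_er p (s : V p) q : path (@eG p) (er s) (map (@er p) q) = path (@Einc p) s q.
Proof. by elim: q s => [|x q IH] s //=; rewrite eG_er IH. Qed.

Lemma walk_er p (s t : V p) q : path (@Einc p) s q -> last s q = t ->
  is_walk (@eG p) (er s) (er t) (map (@er p) q).
Proof. by move=> hp hl; split; [rewrite path_map_er | rewrite last_map hl]. Qed.

Lemma parity_eG p (s t : V p) q : is_walk (@eG p) (er s) (er t) q ->
  odd (size q) = (side s != side t).
Proof.
move=> hw.
have := @walk_parity _ (@eG p) (fun i => side (ev i)) _ q _ _ hw.
rewrite !erK; apply; move=> a b; exact: Einc_side.
Qed.

Lemma lb1 p (s t : V p) q : s != t -> is_walk (@eG p) (er s) (er t) q -> (1 <= size q)%N.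
Proof.
move=> hne; case: q => [|x q] // /walk0 h.
by have := congr1 (@ev p) h; rewrite !erK => heq; rewrite heq eqxx in hne.
Qed.

Lemma lb2 p (s t : V p) q : s != t -> ~~ Einc s t ->
  is_walk (@eG p) (er s) (er t) q -> (2 <= size q)%N.
Proof.
move=> hne hn hw; have := lb1 hne hw.
case: q hw => [|x [|y q]] // hw _.
by have := walk1 hw erefl; rewrite eG_er (negbTE hn).
Qed.

Lemma lb3 p (s t : V p) q : s != t -> ~~ Einc s t -> side s != side t ->
  is_walk (@eG p) (er s) (er t) q -> (3 <= size q)%N.
Proof.
move=> hne hn hs hw; have := lb2 hne hn hw.
have := parity_eG hw; rewrite hs.
by case: q hw => [|x [|y [|z q]]].
Qed.

Lemma lb4 p (s t : V p) q : s != t -> side s = side t ->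
  (forall y, Einc s y -> Einc y t -> False) ->
  is_walk (@eG p) (er s) (er t) q -> (4 <= size q)%N.
Proof.
move=> hne hs hc hw.
have hn : ~~ Einc s t by apply/negP => /Einc_side; rewrite hs eqxx.
have := lb2 hne hn hw; have := parity_eG hw; rewrite hs eqxx.
case: q hw => [|x [|y [|z [|w q]]]] // hw _ _.
have [x' [_ h1 h2]] := walk2 hw erefl.
by case: (hc (ev x')); [move: h1 | move: h2]; rewrite /eG erK.
Qed.

Lemma in_Lv_self p (s : V p) : s \in Lv s.
Proof. by rewrite /Lv setU11. Qed.

Lemma in_Lv_nb p (s t : V p) : Einc s t -> t \in Lv s.
Proof. by move=> h; rewrite /Lv !inE h orbT. Qed.

Lemma in_Lv_X p (s t : V p) : t \in Xlab s -> t \in Lv s.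
Proof. by move=> h; rewrite /Lv !inE h !orbT. Qed.

Lemma in_X_inr p (m c c' : 'F_p) : (inr ((m + 1)%R, c') : V p) \in Xlab (inr (m, c)).
Proof. by apply/imsetP; exists c'; rewrite ?in_setT. Qed.

Lemma in_X_inl p (a b : 'F_p) : (inl ((a + 1)%R, 0%R) : V p) \in Xlab (inl (a, b)).
Proof. by rewrite /= inE. Qed.

Definition hub_ok p (s t h : V p) :=
  h \in Lv s :&: Lv t /\ exists q, [/\ path (@Einc p) s q, last s q = t, h \in s :: q &
     forall q', is_walk (@eG p) (er s) (er t) q' -> (size q <= size q')%N].

Lemma hub_pl p (a b m c : 'F_p) :
  ~~ Einc (inl (a, b)) (inr (m, c)) ->
  hub_ok (inl (a, b)) (inr (m, c)) (inr ((m + 1)%R, (b - (m + 1) * a)%R)) /\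
  hub_ok (inr (m, c)) (inl (a, b)) (inr ((m + 1)%R, (b - (m + 1) * a)%R)).
Proof.
move=> hn.
set c' := (b - (m + 1) * a)%R.
set l' : V p := inr ((m + 1)%R, c').
set Q : V p := inl ((c - c')%R, (m * (c - c') + c)%R).
have h1 : Einc (inl (a, b)) l' by rewrite /l' /c' /=; apply/eqP; ring.
have h2 : Einc l' Q by rewrite /l' /Q /=; apply/eqP; ring.
have h3 : Einc Q (inr (m, c)) by rewrite /Q /=.
have hmem : l' \in Lv (inl (a, b)) :&: Lv (inr (m, c)).
  by rewrite inE in_Lv_nb // in_Lv_X // in_X_inr.
have hne : (inl (a, b) : V p) != inr (m, c) by [].
split; split.
- by [].
- exists [:: l'; Q; inr (m, c)]; split=> //=.
  + by apply/and4P; split=> //; apply/eqP; rewrite /c'; ring.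
  + by rewrite !inE eqxx orbT.
  + by move=> q' hw; exact: (lb3 hne hn _ hw).
- by rewrite setIC.
- exists [:: Q; l'; inl (a, b)]; split=> //=.
  + by apply/and4P; split=> //; apply/eqP; rewrite /c'; ring.
  + by rewrite !inE eqxx !orbT.
  + move=> q' hw; apply: (lb3 _ _ _ hw) => //.
Qed.

Lemma hub_inc p (s t : V p) : Einc s t -> hub_ok s t s.
Proof.
move=> h; split.
  by rewrite inE in_Lv_self in_Lv_nb // Einc_sym.
exists [:: t]; split=> //=.
- by rewrite h.
- by rewrite inE eqxx.
- move=> q' hw; apply: (lb1 _ hw); apply/eqP => est; subst t.
  by rewrite Einc_irr in h.
Qed.

Lemma hub_self p (s : V p) : hub_ok s s s.
Proof.
split; first by rewrite inE in_Lv_self.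
by exists [::]; split=> //=; rewrite inE eqxx.
Qed.

Lemma hub_pp p (a b a' b' : 'F_p) : (inl (a, b) : V p) != inl (a', b') ->
  exists h, hub_ok (inl (a, b)) (inl (a', b')) h.
Proof.
move=> hne.
have hs : side (inl (a, b) : V p) = side (inl (a', b') : V p) by [].
have hn : ~~ Einc (inl (a, b) : V p) (inl (a', b')) by [].
case: (eqVneq a a') => [ea|ha].
- subst a'.
  have hb : b != b' by apply: contraNneq hne => ->.
  set Q : V p := inl ((a + 1)%R, 0%R).
  set l1 : V p := inr ((- b)%R, (b + b * a)%R).
  set l2 : V p := inr ((- b')%R, (b' + b' * a)%R).
  exists Q; split.
    by rewrite inE !in_Lv_X //= inE.
  exists [:: l1; Q; l2; inl (a, b')]; split=> //=.
  + apply/and5P; split=> //; apply/eqP; ring.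
  + by rewrite !inE eqxx !orbT.
  + move=> q' hw; apply: (lb4 hne hs _ hw) => -[[x y]|[m c]] //= /eqP h1 /eqP h2.
    by move: hb; rewrite h1 h2 eqxx.
- set m := ((b - b') / (a - a'))%R.
  set l : V p := inr (m, (b - m * a)%R).
  have haa : (a - a')%R != 0%R by rewrite subr_eq0.
  have h1 : Einc (inl (a, b)) l by rewrite /l /=; apply/eqP; ring.
  have h2 : Einc l (inl (a', b')).
    rewrite /l /=; apply/eqP.
    have -> : (m * a' + (b - m * a) = b - m * (a - a'))%R by ring.
    by rewrite /m divfK //; ring.
  exists l; split.
    by rewrite inE !in_Lv_nb // Einc_sym.
  exists [:: l; inl (a', b')]; split=> //.
  + by move: h1 h2 => /= -> ->.
  + by rewrite !inE eqxx !orbT.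
  + by move=> q' hw; apply: (lb2 hne hn hw).
Qed.

Lemma hub_ll p (m c m' c' : 'F_p) : (inr (m, c) : V p) != inr (m', c') ->
  exists h, hub_ok (inr (m, c)) (inr (m', c')) h.
Proof.
move=> hne.
have hs : side (inr (m, c) : V p) = side (inr (m', c') : V p) by [].
have hn : ~~ Einc (inr (m, c) : V p) (inr (m', c')) by [].
case: (eqVneq m m') => [em|hm].
- subst m'.
  have hc : c != c' by apply: contraNneq hne => ->.
  set M : V p := inr ((m + 1)%R, 0%R).
  set P1 : V p := inl (c, ((m + 1) * c)%R).
  set P2 : V p := inl (c', ((m + 1) * c')%R).
  exists M; split.
    by rewrite inE !in_Lv_X //= in_X_inr.
  exists [:: P1; M; P2; inr (m, c')]; split=> //=.
  + apply/and5P; split=> //; apply/eqP; ring.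
  + by rewrite !inE eqxx !orbT.
  + move=> q' hw; apply: (lb4 hne hs _ hw) => -[[x y]|[m2 c2]] //= /eqP h1 /eqP h2.
    have : c = c' by rewrite -[c](addKr (m * x)%R) -h1 h2; ring.
    by move=> ecc; rewrite ecc eqxx in hc.
- set a0 := ((c' - c) / (m - m'))%R.
  set P : V p := inl (a0, (m * a0 + c)%R).
  have hmm : (m - m')%R != 0%R by rewrite subr_eq0.
  have h1 : Einc (inr (m, c)) P by rewrite /P /=.
  have h2 : Einc P (inr (m', c')).
    rewrite /P /=; apply/eqP.
    have -> : (m * a0 + c = (m - m') * a0 + m' * a0 + c)%R by ring.
    by rewrite /a0 mulrC divfK //; ring.
  exists P; split.
    by rewrite inE !in_Lv_nb // Einc_sym.
  exists [:: P; inr (m', c')]; split=> //.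
  + by move: h1 h2 => /= -> ->.
  + by rewrite !inE eqxx !orbT.
  + by move=> q' hw; apply: (lb2 hne hn hw).
Qed.

Lemma hubV p (s t : V p) : exists h, hub_ok s t h.
Proof.
case: (eqVneq s t) => [<-|hne]; first by exists s; apply: hub_self.
case hst: (Einc s t); first by exists s; apply: hub_inc.
move: hne hst; case: s => [[a b]|[m c]]; case: t => [[a' b']|[m' c']] hne hst.
- exact: hub_pp.
- by have [h _] := hub_pl (negbT hst); eexists; exact: h.
- have hst' : ~~ Einc (inl (a', b') : V p) (inr (m, c)) by rewrite Einc_sym hst.
  by have [_ h] := hub_pl hst'; eexists; exact: h.
- exact: hub_ll.
Qed.

Lemma card_pre p (A : {set V p}) : #|[set j | ev j \in A]| = #|A|.
Proof.
have -> : [set j | ev j \in A] = (@er p) @: A.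
  apply/setP => j; rewrite inE; apply/idP/imsetP => [h|[t ht ->]].
    by exists (ev j) => //; rewrite evK.
  by rewrite erK.
by apply: card_imset; apply: (can_inj (@erK p)).
Qed.

Lemma LG_hub p : is_hub_labeling (@eG p) (@LG p).
Proof.
move=> u w; rewrite -(evK u) -(evK w).
have [h [hm [q [hp hl hin hmin]]]] := hubV (ev u) (ev w).
exists (er h); split.
  by move: hm; rewrite !inE !erK.
exists (map (@er p) q); split; last by rewrite -map_cons; apply: map_f.
split; first exact: walk_er.
by move=> q' hw; rewrite size_map; apply: hmin.
Qed.

Lemma LG_size p : prime p -> (labeling_size (@LG p) <= #|V p| * (1 + (p + p)))%N.
Proof.
move=> pr; rewrite /labeling_size.
have -> : (#|V p| * (1 + (p + p)) = \sum_(i < #|V p|) (1 + (p + p)))%N.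
  by rewrite sum_nat_const card_ord.
apply: leq_sum => i _; rewrite card_pre; exact: Lv_card.
Qed.

Lemma eG_deg p : prime p -> forall x, #|[set y | @eG p x y]| = p.
Proof.
move=> pr x.
have -> : [set y | @eG p x y] = [set j | ev j \in [set t | Einc (ev x) t]].
  by apply/setP => j; rewrite !inE.
by rewrite card_pre Einc_deg.
Qed.

Lemma eG_simple p : simple_graph (@eG p).
Proof. by split=> [a b|a]; rewrite /eG ?Einc_irr // Einc_sym. Qed.

Lemma eG_lower p : prime p -> forall L, is_hub_labeling (@eG p) L -> is_hierarchical L ->
  (#|V p| * p * p.-1 <= 4 * labeling_size L)%N.
Proof.
move=> pr; apply: hhl_lower.
- by case: (eG_simple p).
- by case: (eG_simple p).
- by move=> x u w; apply: Einc_nadj.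
- move=> x y u w h1 h2 h3 h4 hne.
  rewrite -(evK x) -(evK y); congr er; apply: Einc_C4 h1 h2 h3 h4 _.
  by apply: contra hne => /eqP /(can_inj (@evK p)) ->.
- exact: eG_deg.
Qed.

Lemma pack n (e : rel 'I_n) L0 A B : is_hub_labeling e L0 -> (labeling_size L0 <= A)%N ->
  (forall L, is_hub_labeling e L -> is_hierarchical L -> (B <= 4 * labeling_size L)%N) ->
  exists kHL kHHL, [/\ min_HL_size e kHL, min_HHL_size e kHHL, (kHL <= A)%N & (B <= 4 * kHHL)%N].
Proof.
move=> HL0 hA hB.
have [kHL [[L1 [HL1 hs1]] hmin1]] :=
  @ex_min_prop (fun k => exists L, is_hub_labeling e L /\ labeling_size L = k)
    (ex_intro _ _ (ex_intro _ L0 (conj HL0 erefl))).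
pose Lt (v : 'I_n) : {set 'I_n} := [set u : 'I_n | (u <= v)%N].
have HLt : is_hub_labeling e Lt.
  move=> u w; have [h [_ [q [hq hin]]]] := HL0 u w.
  exists (if (u <= w)%N then u else w); split.
    by case: leqP => huw; rewrite !inE ?leqnn ?huw ?(ltnW huw).
  exists q; split=> //; case: leqP => _; first by rewrite mem_head.
  by case: hq => -[_ <-] _; rewrite mem_last.
have hiert : is_hierarchical Lt.
  by exists id; split=> [|u v]; [exists id | rewrite inE].
have [kHHL [[L2 [HL2 [hi2 hs2]]] hmin2]] :=
  @ex_min_prop (fun k => exists L, is_hub_labeling e L /\ is_hierarchical L /\ labeling_size L = k)
    (ex_intro _ _ (ex_intro _ Lt (conj HLt (conj hiert erefl)))).
exists kHL, kHHL; split.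
- split; first by exists L1.
  by move=> L HL; apply: hmin1; exists L.
- split; first by exists L2.
  by move=> L HL hi; apply: hmin2; exists L.
- by apply: leq_trans (hmin1 _ _) hA; exists L0.
- by rewrite -hs2; apply: hB.
Qed.

Unset Implicit Arguments.
Local Open Scope ring_scope.

Lemma cardV p : prime p -> #|V p| = (p * p + p * p)%N.
Proof. by move=> pr; rewrite /V card_sum card_prod card_Fp. Qed.

Theorem mainTheorem14 (R : realType) :
  exists c : R, 0 < c /\
    forall N : nat, exists n : nat, (N <= n)%N /\
      exists e : rel 'I_n, simple_graph e /\
        exists kHL kHHL : nat,
          min_HL_size e kHL /\ min_HHL_size e kHHL /\
          c * Num.sqrt (n%:R) * kHL%:R <= kHHL%:R.
Proof.
exists (32%:R)^-1; split; first by rewrite invr_gt0 ltr0n.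
move=> N.
have [p hp pr] := prime_above (maxn N 3).
have hN : (N < p)%N by move: hp; rewrite gtn_max => /andP[].
have h3 : (3 < p)%N by move: hp; rewrite gtn_max => /andP[].
exists #|V p|; split.
  rewrite cardV //; nia.
exists (@eG p); split; first exact: eG_simple.
have [kHL [kHHL [h1 h2 hA hB]]] := pack (@LG_hub p) (LG_size pr) (eG_lower pr).
exists kHL, kHHL; split=> //; split=> //.
rewrite cardV // in hA hB.
have hsq : Num.sqrt ((p * p + p * p)%N%:R : R) <= (2 * p)%N%:R.
  have e : ((2 * p)%N%:R : R) = Num.sqrt (((2 * p)%N%:R : R) ^+ 2).
    by rewrite sqrtr_sqr ger0_norm ?ler0n.
  rewrite [X in _ <= X]e ler_sqrt ?exprn_ge0 ?ler0n // -natrX ler_nat; nia.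
have hnat : (2 * p * kHL <= 32 * kHHL)%N.
  have e1 : (2 * p * kHL <= 2 * p * ((p * p + p * p) * (1 + (p + p))))%N by rewrite leq_mul2l hA orbT.
  apply: leq_trans e1 _.
  have : (16 * (p * p * p * (p - 1)) <= 32 * kHHL)%N.
    have : ((p * p + p * p) * p * p.-1 = 2 * (p * p * p * (p - 1)))%N.
      by rewrite -subn1; ring.
    lia.
  have : (2 * p * ((p * p + p * p) * (1 + (p + p))) <= 16 * (p * p * p * (p - 1)))%N.
    have -> : (2 * p * ((p * p + p * p) * (1 + (p + p))) = 4 * (p * p * p) * (1 + 2 * p))%N by ring.
    have -> : (16 * (p * p * p * (p - 1)) = 4 * (p * p * p) * (4 * (p - 1)))%N by ring.
    rewrite leq_mul2l; apply/orP; right; lia.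
  lia.
have c0 : (0 : R) <= (32%:R)^-1 by rewrite invr_ge0 ler0n.
rewrite cardV //.
apply: (@le_trans _ _ ((32%:R)^-1 * (2 * p)%N%:R * kHL%:R)).
  by rewrite ler_wpM2r ?ler0n // ler_wpM2l.
rewrite -mulrA -natrM ler_pdivrMl ?ltr0n // -natrM ler_nat.
exact: hnat.
Qed.
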